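(* The family of Boolean functions $\{\operatorname{SSD}_{2k,k+1}\}_{k \geq 1}$ is not in $\mathrm{AC}^0$; that is, there is no family of Boolean circuits with $\land$, $\lor$, $\neg$ gates (unbounded fan-in), of size polynomial in the input length and of constant depth, that computes $\operatorname{SSD}_{2k,k+1}$ for all $k \geq 1$.
   Context: For integers $n \geq k \geq 1$, $\operatorname{SSD}_{n,k} : \{0,1\}^n \times \{0,1\}^k \to \{0,1\}$ is defined by $\operatorname{SSD}_{n,k}(x,y) = 1$ if $y$ is a subsequence of $x$ (i.e. there are indices $i_1 < i_2 < \dots < i_k$ with $x_{i_j} = y_j$ for all $j$), and $0$ otherwise. It is viewed as a Boolean function of its $n+k$ input bits. *)

(* Defs.v *)
From mathcomp Require Import all_boot.
Set Implicit Arguments. Unset Strict Implicit. Unset Printing Implicit Defensive.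

Definition SSD (n k : nat) (x : n.-tuple bool) (y : k.-tuple bool) : bool :=
  subseq y x.

Definition SSD_bits (n k : nat) (z : (n + k).-tuple bool) : bool :=
  subseq (drop n z) (take n z).
Arguments SSD_bits : clear implicits.

(* A circuit on N inputs is a list of gates g_0, ..., g_{s-1}.  Wires are
   numbered: wires 0..N-1 are the inputs, wire N+i is the output of gate g_i.
   A gate may only read wires with smaller numbers (so the circuit is a DAG).
   The output of the circuit is the last wire (the last gate).  *)
Inductive gate : Type :=
| GAnd of seq nat
| GOr  of seq nat
| GNot of nat.

Definition circuit := seq gate.

Definition gate_inputs (g : gate) : seq nat :=
  match g with GAnd s => s | GOr s => s | GNot j => [:: j] end.

Fixpoint wf_from (m : nat) (C : circuit) : bool :=
  match C with
  | [::] => true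
  | g :: C' => all (fun j => j < m) (gate_inputs g) && wf_from m.+1 C'
  end.

Definition wf_circuit (N : nat) (C : circuit) : bool := wf_from N C.

Definition csize (C : circuit) : nat := size C.

Definition gate_val (vals : seq bool) (g : gate) : bool :=
  match g with
  | GAnd s => all (fun j => nth false vals j) s
  | GOr s => has (fun j => nth false vals j) s
  | GNot j => ~~ nth false vals j
  end.

Definition wire_values (C : circuit) (inp : seq bool) : seq bool :=
  foldl (fun vals g => rcons vals (gate_val vals g)) inp C.

Definition circuit_eval (C : circuit) (inp : seq bool) : bool :=
  last false (wire_values C inp).

Definition gate_depth (ds : seq nat) (g : gate) : nat :=
  (\max_(j <- gate_inputs g) nth 0 ds j).+1.

Definition wire_depths (N : nat) (C : circuit) : seq nat :=
  foldl (fun ds g => rcons ds (gate_depth ds g)) (nseq N 0) C.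

Definition cdepth (N : nat) (C : circuit) : nat :=
  \max_(d <- wire_depths N C) d.

Definition AC0_family (N : nat -> nat) (f : forall k, (N k).-tuple bool -> bool) : Prop :=
  exists (C : nat -> circuit) (d c : nat),
    forall k, 1 <= k ->
      [/\ wf_circuit (N k) (C k),
          cdepth (N k) (C k) <= d,
          csize (C k) <= c * (N k) ^ c
        & forall z : (N k).-tuple bool, circuit_eval (C k) z = f k z].

(* Main.v *)
Require Import Defs.
From mathcomp Require Import all_boot all_algebra zify ring.
Set Implicit Arguments. Unset Strict Implicit. Unset Printing Implicit Defensive.
Import GRing.Theory.

Section SD.
Variable T : finType.
Definition sd (A B : {set T}) := (A :\: B) :|: (B :\: A).

Lemma sdK A B : sd A (sd A B) = B.
Proof. apply/setP=> i; rewrite !inE; by case: (i \in A); case: (i \in B). Qed.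

Lemma sd_inj A : injective (sd A).
Proof. by move=> B C H; rewrite -(sdK A B) H sdK. Qed.

Lemma card_sd_le A B : #|sd A B| <= #|A| + #|B|.
Proof.
apply: leq_trans (_ : #|A :|: B| <= _); last by rewrite cardsU leq_subr.
by apply: subset_leq_card; apply/subsetP=> i; rewrite !inE; case: (i \in A); case: (i \in B).
Qed.

Lemma odd_sd A B : odd #|sd A B| = odd #|A| (+) odd #|B|.
Proof.
have h1 : #|A| = #|A :\: B| + #|A :&: B|.
  by rewrite cardsD subnK // subset_leq_card // subsetIl.
have h2 : #|B| = #|B :\: A| + #|A :&: B|.
  by rewrite cardsD setIC subnK // subset_leq_card // subsetIr.
have h3 : #|sd A B| = #|A :\: B| + #|B :\: A|.
  rewrite /sd cardsU.
  suff -> : (A :\: B) :&: (B :\: A) = set0 by rewrite cards0 subn0.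
  by apply/setP=> i; rewrite !inE; case: (i \in A); case: (i \in B).
by rewrite h1 h2 h3 !oddD; case: (odd _); case: (odd _); case: (odd _).
Qed.

Lemma sdI A B C : sd A B :&: C = sd (A :&: C) (B :&: C).
Proof. apply/setP=> i; rewrite !inE; by case: (i \in A); case: (i \in B); case: (i \in C). Qed.
End SD.

Notation F := 'Z_3.

Lemma F_sq (x : F) : (x != 0 -> x * x = 1)%R.
Proof. by case: x => [[|[|[|]]]] //= H _; apply/val_inj. Qed.

Section Poly.
Variable n : nat.
Notation X := (n.-tuple bool).

Definition Zs (z : X) : {set 'I_n} := [set i | tnth z i].
Definition yS (S : {set 'I_n}) (z : X) : F := if odd #|S :&: Zs z| then (-1)%R else 1%R.

Lemma ySD A B z : (yS A z * yS B z)%R = yS (sd A B) z.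
Proof.
rewrite /yS sdI odd_sd.
by case: (odd _); case: (odd _) => /=; rewrite ?mulrNN ?mulr1 ?mulN1r ?mul1r.
Qed.

Lemma yS0 z : yS set0 z = 1%R.
Proof. by rewrite /yS set0I cards0. Qed.

Definition deg_le (K : nat) (g : X -> F) :=
  exists c : {ffun {set 'I_n} -> F},
    (forall S : {set 'I_n}, K < #|S| -> c S = 0%R) /\ forall z, g z = (\sum_S c S * yS S z)%R.

Lemma deg_ext K g h : (forall z, g z = h z) -> deg_le K g -> deg_le K h.
Proof. move=> E [c [H1 H2]]; exists c; split=> // z; by rewrite -E. Qed.

Lemma deg_mono K K' g : K <= K' -> deg_le K g -> deg_le K' g.
Proof. move=> L [c [H1 H2]]; exists c; split=> // S HS; apply: H1; exact: leq_trans HS. Qed.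

Lemma deg_cst K a : deg_le K (fun _ => a).
Proof.
exists [ffun S => if S == set0 then a else 0%R]; split.
  move=> S HS; rewrite ffunE; case: eqP => // E; by rewrite E cards0 in HS.
move=> z; rewrite (bigD1 set0) //= ffunE eqxx yS0 mulr1 big1 ?addr0 // => S /negbTE HS.
by rewrite ffunE HS mul0r.
Qed.

Lemma deg_yS (S : {set 'I_n}) : deg_le #|S| (yS S).
Proof.
exists [ffun T => if T == S then 1%R else 0%R]; split.
  move=> T HT; rewrite ffunE; case: eqP => // E; by rewrite E ltnn in HT.
move=> z; rewrite (bigD1 S) //= ffunE eqxx mul1r big1 ?addr0 // => T /negbTE HS.
by rewrite ffunE HS mul0r.
Qed.

Lemma deg_add K g h : deg_le K g -> deg_le K h -> deg_le K (fun z => g z + h z)%R.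
Proof.
move=> [c [H1 H2]] [d [H3 H4]]; exists [ffun S => c S + d S]%R; split.
  by move=> S HS; rewrite ffunE H1 // H3 // addr0.
move=> z; rewrite H2 H4 -big_split /=; apply: eq_bigr => S _; by rewrite ffunE mulrDl.
Qed.

Lemma deg_scale K a g : deg_le K g -> deg_le K (fun z => a * g z)%R.
Proof.
move=> [c [H1 H2]]; exists [ffun S => a * c S]%R; split.
  by move=> S HS; rewrite ffunE H1 // mulr0.
move=> z; rewrite H2 mulr_sumr; apply: eq_bigr => S _; by rewrite ffunE mulrA.
Qed.

Lemma deg_mul K1 K2 g h : deg_le K1 g -> deg_le K2 h -> deg_le (K1 + K2) (fun z => g z * h z)%R.
Proof.
move=> [c [H1 H2]] [d [H3 H4]].
exists [ffun U => \sum_S c S * d (sd S U)]%R; split.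
  move=> U HU; rewrite ffunE big1 // => S _.
  case: (leqP #|S| K1) => HS; last by rewrite H1 // mul0r.
  rewrite H3 ?mulr0 //.
  have := card_sd_le S (sd S U); rewrite sdK => HU2.
  rewrite -(ltn_add2l #|S|); apply: leq_trans HU2; apply: leq_trans HU.
  by rewrite ltnS leq_add2r.
move=> z; rewrite [RHS](eq_bigr (fun U => \sum_S c S * d (sd S U) * yS U z)%R); last first.
  by move=> U _; rewrite ffunE mulr_suml.
rewrite H2 H4 mulr_suml.
rewrite exchange_big /=; apply: eq_bigr => S _.
rewrite mulr_sumr (reindex_inj (@sd_inj _ S)) /=; apply: eq_bigr => T _.
have E : yS T z = (yS S z * yS (sd S T) z)%R by rewrite ySD sdK.
rewrite E; ring.
Qed.

End Poly.
Arguments deg_cst {n} K a.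

Section Poly2.
Variable n : nat.
Notation X := (n.-tuple bool).

Lemma deg_sum (I : Type) (r : seq I) (P : pred I) K (G : I -> X -> F) :
  (forall i, P i -> deg_le K (G i)) ->
  deg_le K (fun z => \sum_(i <- r | P i) G i z)%R.
Proof.
move=> HG; elim: r => [|i r IH].
  by apply: deg_ext (deg_cst _ 0%R) => z; rewrite big_nil.
case Pi: (P i).
  by apply: deg_ext (deg_add (HG i Pi) IH) => z; rewrite big_cons Pi.
by apply: deg_ext IH => z; rewrite big_cons Pi.
Qed.

Lemma deg_prod (l K : nat) (G : 'I_l -> X -> F) :
  (forall i, deg_le K (G i)) -> deg_le (l * K) (fun z => \prod_(i < l) G i z)%R.
Proof.
elim: l G => [|l IH] G HG.
  by apply: deg_ext (deg_cst _ 1%R) => z; rewrite big_ord0.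
have := deg_mul (IH (fun i => G (widen_ord (leqnSn l) i)) (fun i => HG _)) (HG ord_max).
rewrite mulSn addnC => H; apply: deg_ext H => z; by rewrite big_ord_recr.
Qed.

Lemma card1Zs (i : 'I_n) z : #|[set i] :&: Zs z| = tnth z i.
Proof.
case H: (tnth z i).
  suff -> : [set i] :&: Zs z = [set i] by rewrite cards1.
  by apply/setP=> j; rewrite !inE; case: eqP => // ->; rewrite H.
suff -> : [set i] :&: Zs z = set0 by rewrite cards0.
by apply/setP=> j; rewrite !inE; case: eqP => // ->; rewrite H.
Qed.

Lemma deg_var (i : 'I_n) : deg_le 1 (fun z => (tnth z i)%:R%R : F).
Proof.
have := deg_yS [set i]; rewrite cards1 => Hy.
have := deg_add (deg_cst 1 2%R) Hy => H.
apply: deg_ext H => z; rewrite /yS card1Zs; case: (tnth z i) => /=; exact/val_inj.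
Qed.

Definition Par (z : X) : F := (odd #|Zs z|)%:R%R.

Lemma ySfull (z : X) : yS setT z = (1 - 2 * Par z)%R.
Proof. rewrite /yS /Par setTI; case: (odd _) => /=; exact/val_inj. Qed.

Lemma ySC (S : {set 'I_n}) (z : X) : yS S z = (yS setT z * yS (~: S) z)%R.
Proof.
rewrite ySD; congr yS; apply/setP=> i; rewrite !inE; by case: (i \in S).
Qed.

Lemma deg_full (h : X -> F) : deg_le n h.
Proof.
pose del (a z : X) := (\prod_(i < n) (if tnth a i then (tnth z i)%:R else 1 - (tnth z i)%:R)%R)%R : F.
have Hd : forall a, deg_le n (del a).
  move=> a; rewrite -[X in deg_le X](muln1 n); apply: deg_prod => i.
  case: (tnth a i); first exact: deg_var.
  apply: deg_ext (deg_add (deg_cst 1 1%R) (deg_scale (-1)%R (deg_var i))) => z.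
  by rewrite mulN1r.
have Hv : forall a z, del a z = (a == z)%:R%R.
  move=> a z; case: eqP => [<-|/eqP Ha].
    rewrite /del big1 // => i _; by case: (tnth a i); rewrite /= ?subrr ?subr0.
  have [i Hi] : exists i, tnth a i != tnth z i.
    apply/existsP; apply: contraR Ha => /existsPn H; apply/eqP/eq_from_tnth => i.
    by have := H i; rewrite negbK => /eqP.
  rewrite /del (bigD1 i) //=; move: Hi; case: (tnth a i); case: (tnth z i) => //= _;
   by rewrite ?subrr mul0r.
have := @deg_sum X (index_enum _) predT n _ (fun a _ => deg_scale (h a) (Hd a)).
apply: deg_ext => z; rewrite (bigD1 z) //= Hv eqxx mulr1 big1 ?addr0 // => a Ha.
by rewrite Hv (negbTE Ha) mulr0.
Qed.

Lemma hard D (P : X -> F) : deg_le D P ->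
  #|[set z | P z == Par z]| <= #|[set S : {set 'I_n} | #|S| <= n./2 + D]|.
Proof.
move=> HP.
set G := [set z | P z == Par z]; set K := n./2 + D.
have HG : forall h : X -> F, exists H, deg_le K H /\ {in G, forall z, h z = H z}.
  move=> h; have [c [_ Hc]] := deg_full h.
  pose q z := (1 - 2 * P z)%R.
  have Hq : deg_le D q.
    by apply: deg_ext (deg_add (deg_cst D 1%R) (deg_scale (-2)%R HP)) => z; rewrite mulNr.
  exists (fun z => \sum_S c S * (if (#|S| <= K)%N then yS S z else q z * yS (~: S) z))%R.
  split.
    apply: deg_sum => S _; apply: deg_scale.
    case: (leqP #|S| K) => HS.
      exact: deg_mono HS (deg_yS S).
    have := deg_mul Hq (deg_yS (~: S)); apply: deg_mono.
    have := cardsC S; rewrite card_ord => HC.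
    have := odd_double_half n; move: HS; rewrite /K.
    rewrite -addnn; lia.
  move=> z; rewrite inE => /eqP Hz; rewrite Hc; apply: eq_bigr => S _.
  case: ifP => // _; by rewrite ySC ySfull /q Hz.
set Small := [set S : {set 'I_n} | #|S| <= K].
pose Phi (c : {ffun {set 'I_n} -> F}) : {ffun X -> F} :=
  [ffun z => if z \in G then \sum_S c S * yS S z else 0]%R.
have Hsub : pffun_on 0%R G [set: F] \subset Phi @: pffun_on 0%R Small [set: F].
  apply/subsetP => f /pffun_onP [Hs _].
  have [H [[c [Hc1 Hc2]] HH]] := HG f.
  apply/imsetP; exists c.
    apply/pffun_onP; split; last by move=> x _; rewrite inE.
    apply/subsetP => S; rewrite !inE; apply: contraR; rewrite -ltnNge => HS.
    by rewrite Hc1.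
  apply/ffunP => z; rewrite ffunE; case: ifP => Hz.
    by rewrite HH // Hc2.
  apply/eqP; apply: contraFT Hz => Hf; exact: (subsetP Hs).
have := leq_trans (subset_leq_card Hsub) (leq_imset_card _ _).
rewrite !card_pffun_on cardsT card_ord leq_exp2l //.
Qed.

End Poly2.

Lemma leq_expl2 m n e : m <= n -> m ^ e <= n ^ e.
Proof. move=> H; elim: e => // e IH; by rewrite !expnS leq_mul. Qed.

Lemma card_setsT (T : finType) : #|{set T}| = 2 ^ #|T|.
Proof. by rewrite -cardsT -(card_powerset [set: T]) powersetT cardsT. Qed.

Section Avg.
Variables (r l : nat).

Definition Bad (b : {set 'I_r}) := [set S : {set 'I_r} | 3 %| #|S :&: b|].

Definition fail (f : {ffun 'I_l -> {set 'I_r}}) (b : {set 'I_r}) : bool :=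
  (b != set0) && [forall i, f i \in Bad b].

Lemma Bad_half b : b != set0 -> #|Bad b| * 2 <= 2 ^ r.
Proof.
case/set0Pn => j0 Hj0.
pose phi (S : {set 'I_r}) := sd [set j0] S.
have phi_inj : injective phi by exact: sd_inj.
have Hdis : [disjoint Bad b & phi @: Bad b].
  apply/pred0P => S /=; rewrite inE; apply/negP => /andP [HS /imsetP [T HT ES]].
  move: HS HT; rewrite ES !inE /phi.
  case HjT: (j0 \in T).
    have -> : sd [set j0] T :&: b = (T :&: b) :\ j0.
      apply/setP=> i; rewrite !inE; case: eqP => [->|_]; rewrite ?HjT ?Hj0 /=; try (by case: (i \in T); case: (i \in b)); by [].
    have := cardsD1 j0 (T :&: b); rewrite !inE HjT Hj0 /= add1n => ->.
    move=> H1 H2; lia.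
  have -> : sd [set j0] T :&: b = j0 |: (T :&: b).
    apply/setP=> i; rewrite !inE; case: eqP => [->|_]; rewrite ?HjT ?Hj0 /=; try (by case: (i \in T); case: (i \in b)); by [].
  rewrite cardsU1 !inE HjT /= add1n => H1 H2; lia.
have := max_card (Bad b :|: phi @: Bad b).
rewrite cardsU (disjoint_setI0 Hdis) cards0 subn0 card_imset // card_setsT card_ord.
by rewrite muln2 -addnn.
Qed.
End Avg.

Section Avg2.
Variables (r l : nat).

Lemma card_sum (T : finType) (p : pred T) : #|[set x | p x]| = \sum_x (p x : nat).
Proof. rewrite -sum1_card big_mkcond; apply: eq_bigr => x _; rewrite inE; by case: (p x). Qed.

Lemma fail_count (b : {set 'I_r}) : #|[set f | @fail r l f b]| * 2^l <= (2^r)^l.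
Proof.
case: (b =P set0) => [E|/eqP Hb].
  have -> : [set f | @fail r l f b] = set0 by apply/setP => f; rewrite !inE /fail E eqxx.
  by rewrite cards0.
have -> : [set f | @fail r l f b] = [set f in ffun_on (Bad b)].
  apply/setP => f; rewrite !inE /fail Hb /=.
  apply/forallP/ffun_onP => H i; exact: H.
rewrite cardsE card_ffun_on card_ord -expnMn; apply: leq_expl2; exact: Bad_half.
Qed.

Lemma avg (T : finType) (bf : T -> {set 'I_r}) :
  exists f : {ffun 'I_l -> {set 'I_r}}, #|[set x | fail f (bf x)]| * 2^l <= #|T|.
Proof.
suff /existsP [f Hf] : [exists f : {ffun 'I_l -> {set 'I_r}}, #|[set x | fail f (bf x)]| * 2^l <= #|T|].
  by exists f.
apply: contraT; rewrite negb_exists => /forallP H.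
have S1 : \sum_(f : {ffun 'I_l -> {set 'I_r}}) #|[set x | fail f (bf x)]| * 2^l
          = \sum_(x : T) #|[set f | @fail r l f (bf x)]| * 2^l.
  rewrite -!big_distrl /=; congr (_ * _).
  under eq_bigr => f _ do rewrite card_sum.
  rewrite exchange_big /=; apply: eq_bigr => x _; by rewrite card_sum.
have S2 : \sum_(x : T) #|[set f | @fail r l f (bf x)]| * 2^l <= \sum_(x : T) (2^r)^l.
  by apply: leq_sum => x _; apply: fail_count.
have S3 : \sum_(f : {ffun 'I_l -> {set 'I_r}}) #|T|.+1
          <= \sum_(f : {ffun 'I_l -> {set 'I_r}}) #|[set x | fail f (bf x)]| * 2^l.
  by apply: leq_sum => f _; rewrite ltnNge; apply: H.
rewrite S1 !sum_nat_const card_ffun card_setsT !card_ord in S2 S3.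
have := leq_trans S3 S2.
have : 0 < (2^r)^l by rewrite !expn_gt0.
rewrite (_ : #|xpredT| = #|T|) //; rewrite mulnS [_ * (2^r)^l]mulnC.
move=> H1 H2; exfalso; lia.
Qed.
End Avg2.

Lemma natF3 k : (k%:R : F)%R = 0%R -> 3 %| k.
Proof. by move/(congr1 val); rewrite /= Zp_nat /= => /eqP. Qed.

Lemma natb_neg (b : bool) : ((~~ b)%:R : F)%R = (1 - b%:R)%R.
Proof. by case: b; rewrite /= ?subrr ?subr0. Qed.

Definition ORap l r (f : {ffun 'I_l -> {set 'I_r}}) (v : 'I_r -> F) : F :=
  (1 - \prod_(i < l) (1 - (\sum_(j in f i) v j) ^+ 2))%R.

Lemma ORap_ok l r (f : {ffun 'I_l -> {set 'I_r}}) (b : 'I_r -> bool) :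
  ~~ fail f [set j | b j] -> ORap f (fun j => (b j)%:R)%R = ([exists j, b j])%:R%R.
Proof.
rewrite /fail negb_and negbK; case/orP => [/eqP E | ].
  have Hb : forall j, b j = false.
    by move=> j; apply/negbTE; have := in_set0 j; rewrite -E inE => ->.
  have -> : [exists j, b j] = false by apply/negbTE/existsPn => j; rewrite Hb.
  rewrite /ORap big1 ?subrr // => i _.
  by rewrite big1 ?expr0n ?subr0 // => j _; rewrite Hb.
rewrite negb_forall => /existsP [i Hi].
have Hs : (\sum_(j in f i) (b j)%:R)%R = (#|f i :&: [set j | b j]|%:R : F)%R.
  rewrite -natr_sum; congr (_%:R)%R.
  rewrite -sum1_card big_mkcond [RHS]big_mkcond /=; apply: eq_bigr => j _.
  by rewrite !inE; case: (j \in f i); case: (b j).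
have Hnz : (\sum_(j in f i) (b j)%:R)%R != 0%R :> F.
  by rewrite Hs; apply: contra Hi => /eqP /natF3 H; rewrite inE.
have Hj : [exists j, b j].
  apply: contraR Hnz => /existsPn H; rewrite big1 // => j _.
  by rewrite (negbTE (H j)).
by rewrite Hj /ORap (bigD1 i) //= expr2 F_sq // subrr mul0r subr0.
Qed.

Lemma deg_ORap n l r (f : {ffun 'I_l -> {set 'I_r}}) (p : 'I_r -> n.-tuple bool -> F) M :
  (forall j, deg_le M (p j)) -> deg_le (2 * l * M) (fun z => ORap f (fun j => p j z)).
Proof.
move=> Hp.
have Hs : forall i, deg_le M (fun z => \sum_(j in f i) p j z)%R.
  by move=> i; apply: deg_sum => j _.
have Hq : forall i, deg_le (M + M) (fun z => 1 - (\sum_(j in f i) p j z) ^+ 2)%R.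
  move=> i; apply: deg_ext (deg_add (deg_cst _ 1%R) (deg_scale (-1)%R (deg_mul (Hs i) (Hs i)))).
  by move=> z; rewrite expr2 mulN1r.
have Hpr := deg_prod Hq.
have H := deg_add (deg_cst _ 1%R) (deg_scale (-1)%R Hpr).
have -> : 2 * l * M = l * (M + M) by rewrite addnn -mul2n mulnCA mulnA.
by apply: deg_ext H => z; rewrite mulN1r.
Qed.

Lemma ORap_ext l r (f : {ffun 'I_l -> {set 'I_r}}) v1 v2 :
  (forall j, v1 j = v2 j) -> ORap f v1 = ORap f v2.
Proof.
move=> E; rewrite /ORap; congr (_ - _)%R; apply: eq_bigr => i _.
by congr (_ - _ ^+ 2)%R; apply: eq_bigr => j _.
Qed.

Lemma has_nth_ex (T : eqType) (p : pred T) (s : seq T) x0 :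
  has p s = [exists j : 'I_(size s), p (nth x0 s j)].
Proof.
apply/hasP/existsP => [[x xs px]|[j pj]].
  have Hi : index x s < size s by rewrite index_mem.
  by exists (Ordinal Hi) => /=; rewrite (nth_index _ xs).
by exists (nth x0 s j) => //; apply: mem_nth.
Qed.

Lemma all_nth_fa (T : eqType) (p : pred T) (s : seq T) x0 :
  all p s = [forall j : 'I_(size s), p (nth x0 s j)].
Proof.
apply/negb_inj; rewrite -has_predC (has_nth_ex _ _ x0) negb_forall; by [].
Qed.

Section Gate.
Variables (n l W : nat) (vals : n.-tuple bool -> seq bool) (ds : seq nat).
Variables (P : nat -> n.-tuple bool -> F) (B : {set n.-tuple bool}).
Hypothesis Hl : 0 < l.
Hypothesis HP : forall w, w < W -> deg_le ((2*l)^(nth 0 ds w)) (P w) /\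
  (forall z, z \notin B -> P w z = (nth false (vals z) w)%:R%R).

Lemma cardX : #|{: n.-tuple bool}| = 2 ^ n.
Proof. by rewrite card_tuple card_bool. Qed.

Lemma inputs_deg (s : seq nat) : all (fun j => j < W) s ->
  forall j : 'I_(size s), deg_le ((2*l)^(\max_(i <- s) nth 0 ds i)) (P (nth 0%N s j)).
Proof.
move=> Hall j.
have Hj : nth 0%N s j < W by apply: (allP Hall); apply: mem_nth.
apply: deg_mono (proj1 (HP Hj)).
apply: leq_pexp2l; first by rewrite muln_gt0 Hl.
by apply: leq_bigmax_seq => //; apply: mem_nth.
Qed.

Lemma gate_step g : all (fun j => j < W) (gate_inputs g) ->
  exists Pg (E : {set n.-tuple bool}), #|E| * 2^l <= 2^n /\
    deg_le ((2*l)^(gate_depth ds g)) Pg /\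
    forall z, z \notin B -> z \notin E -> Pg z = (gate_val (vals z) g)%:R%R.
Proof.
case: g => [s|s|j] /= Hall.
-
  have [f Hf] := @avg (size s) l _ (fun z => [set j : 'I_(size s) | ~~ nth false (vals z) (nth 0%N s j)]).
  exists (fun z => 1 - ORap f (fun j => 1 - P (nth 0%N s j) z))%R.
  exists [set z | fail f [set j : 'I_(size s) | ~~ nth false (vals z) (nth 0%N s j)]].
  split; first by rewrite -cardX.
  split.
    rewrite /gate_depth /= expnS.
    have H := deg_ORap f (fun j => deg_add (deg_cst _ 1%R) (deg_scale (-1)%R (inputs_deg Hall j))).
    apply: deg_ext (deg_add (deg_cst _ 1%R) (deg_scale (-1)%R H)) => z.
    rewrite mulN1r; congr (_ - _)%R; apply: ORap_ext => j.
    by rewrite mulN1r.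
  move=> z zB zE.
  have E1 : forall j : 'I_(size s), (1 - P (nth 0%N s j) z)%R =
            (~~ nth false (vals z) (nth 0%N s j))%:R%R.
    move=> j; rewrite natb_neg; congr (_ - _)%R.
    by apply: (proj2 (HP _)) => //; apply: (allP Hall); apply: mem_nth.
  rewrite (ORap_ext f E1) ORap_ok; last by move: zE; rewrite inE.
  rewrite (all_nth_fa _ _ 0) -natb_neg negb_exists.
  set A1 := [forall x, _]; set A2 := [forall x, _].
  suff -> : A1 = A2 by [].
  rewrite /A1 /A2; apply: eq_forallb => j; by rewrite negbK.
-
  have [f Hf] := @avg (size s) l _ (fun z => [set j : 'I_(size s) | nth false (vals z) (nth 0%N s j)]).
  exists (fun z => ORap f (fun j => P (nth 0%N s j) z))%R.
  exists [set z | fail f [set j : 'I_(size s) | nth false (vals z) (nth 0%N s j)]].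
  split; first by rewrite -cardX.
  split.
    rewrite /gate_depth /= expnS.
    by have := deg_ORap f (inputs_deg Hall).
  move=> z zB zE.
  have E1 : forall j : 'I_(size s), P (nth 0%N s j) z =
            (nth false (vals z) (nth 0%N s j))%:R%R.
    move=> j.
    by apply: (proj2 (HP _)) => //; apply: (allP Hall); apply: mem_nth.
  rewrite (ORap_ext f E1) ORap_ok; last by move: zE; rewrite inE.
  by rewrite (has_nth_ex _ _ 0).
-
  have Hj : j < W by move: Hall; rewrite andbT.
  exists (fun z => 1 - P j z)%R; exists set0.
  split; first by rewrite cards0.
  split.
    have H := deg_add (deg_cst _ 1%R) (deg_scale (-1)%R (proj1 (HP Hj))).
    apply: deg_mono (deg_ext _ H); last by move=> z; rewrite mulN1r.
    rewrite /gate_depth /= big_seq1.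
    apply: leq_pexp2l; [by rewrite muln_gt0 Hl | exact: leqnSn].
  move=> z zB _; by rewrite natb_neg (proj2 (HP Hj)).
Qed.
End Gate.

Lemma wv_rcons C g inp : wire_values (rcons C g) inp =
  rcons (wire_values C inp) (gate_val (wire_values C inp) g).
Proof. by rewrite /wire_values foldl_rcons. Qed.

Lemma size_wv C inp : size (wire_values C inp) = size inp + size C.
Proof.
elim/last_ind: C => [|C g IH]; first by rewrite addn0.
by rewrite wv_rcons !size_rcons IH addnS.
Qed.

Lemma wd_rcons N C g : wire_depths N (rcons C g) =
  rcons (wire_depths N C) (gate_depth (wire_depths N C) g).
Proof. by rewrite /wire_depths foldl_rcons. Qed.

Lemma size_wd N C : size (wire_depths N C) = N + size C.
Proof.
elim/last_ind: C => [|C g IH]; first by rewrite addn0 /wire_depths /= size_nseq.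
by rewrite wd_rcons !size_rcons IH addnS.
Qed.

Lemma wf_rcons m C g : wf_from m (rcons C g) =
  wf_from m C && all (fun j => j < m + size C) (gate_inputs g).
Proof.
elim: C m => [|g' C IH] m /=; first by rewrite addn0 andbT.
by rewrite IH addSnnS andbA.
Qed.

Section Approx.
Variables (n l N : nat) (rho : n.-tuple bool -> seq bool).
Hypothesis Hl : 0 < l.
Hypothesis Hsize : forall z, size (rho z) = N.
Hypothesis Hrho : forall w, w < N -> deg_le 1 (fun z => (nth false (rho z) w)%:R%R : F).

Lemma approx C : wf_from N C -> exists (P : nat -> n.-tuple bool -> F) (B : {set n.-tuple bool}),
  #|B| * 2^l <= size C * 2^n /\
  forall w, w < N + size C -> deg_le ((2*l)^(nth 0 (wire_depths N C) w)) (P w) /\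
    forall z, z \notin B -> P w z = (nth false (wire_values C (rho z)) w)%:R%R.
Proof.
elim/last_ind: C => [|C g IH].
  move=> _; exists (fun w z => (nth false (rho z) w)%:R%R), set0.
  split; first by rewrite cards0.
  move=> w; rewrite addn0 => Hw; split => //.
  by rewrite /wire_depths /= nth_nseq if_same expn0; apply: Hrho.
rewrite wf_rcons => /andP [HC Hg].
have [P [B [HB HP]]] := IH HC.
have [Pg [E [HE [Hdeg Hok]]]] :=
  @gate_step n l (N + size C) (fun z => wire_values C (rho z)) (wire_depths N C) P B Hl HP g Hg.
exists (fun w => if w == N + size C then Pg else P w), (B :|: E).
split.
  rewrite size_rcons mulSn addnC; apply: leq_trans (leq_add HB HE).
  rewrite -mulnDl leq_mul2r; apply/orP; right.
  by rewrite cardsU leq_subr.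
move=> w; rewrite size_rcons addnS ltnS leq_eqVlt => /orP [/eqP Ew|Hw].
  rewrite Ew eqxx wd_rcons nth_rcons size_wd ltnn eqxx; split => // z.
  rewrite inE negb_or => /andP [zB zE].
  by rewrite wv_rcons nth_rcons size_wv Hsize ltnn eqxx Hok.
rewrite (ltn_eqF Hw) wd_rcons nth_rcons size_wd Hw; split; first exact: (proj1 (HP _ Hw)).
move=> z; rewrite inE negb_or => /andP [zB _].
by rewrite wv_rcons nth_rcons size_wv Hsize Hw (proj2 (HP _ Hw)).
Qed.

Lemma approx_out C d : wf_circuit N C -> cdepth N C <= d -> 0 < N ->
  exists (P : n.-tuple bool -> F) (B : {set n.-tuple bool}),
  #|B| * 2^l <= size C * 2^n /\ deg_le ((2*l)^d) P /\
  forall z, z \notin B -> P z = (circuit_eval C (rho z))%:R%R.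
Proof.
move=> HC Hd HN.
have [P [B [HB HP]]] := approx HC.
have Hw : (N + size C).-1 < N + size C by rewrite prednK // ltn_addr.
have [Hdeg Hok] := HP _ Hw.
exists (P (N + size C).-1), B; split => //; split.
  apply: deg_mono Hdeg; apply: leq_pexp2l; first by rewrite muln_gt0.
  apply: leq_trans Hd; rewrite /cdepth.
  by apply: leq_bigmax_seq => //; apply: mem_nth; rewrite size_wd.
move=> z zB; by rewrite Hok // /circuit_eval -nth_last size_wv Hsize.
Qed.
End Approx.

Lemma central m : 'C(m.*2, m) ^ 2 * (3 * m + 1) <= 16 ^ m.
Proof.
elim: m => [|m IH]; first by rewrite bin0.
have E1 : m.+1 * 'C(m.+1.*2, m.+1) = 2 * (m.*2.+1) * 'C(m.*2, m).
  have h1 := mul_bin_diag m.*2.+1 m.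
  have h2 : 'C(m.*2.+1, m.+1) = 'C(m.*2.+1, m).
    have Hle : m <= m.*2.+1 by rewrite -addnn; lia.
    have := bin_sub Hle.
    by rewrite (_ : m.*2.+1 - m = m.+1) // -addnn; lia.
  have h1' : m.+1 * 'C(m.*2.+1, m.+1) = m.*2.+1 * 'C(m.*2, m) by rewrite -h1.
  have h3 : 'C(m.+1.*2, m.+1) = 2 * 'C(m.*2.+1, m.+1).
    by rewrite doubleS binS -h2 mul2n addnn.
  by rewrite h3 mulnCA h1' mulnA.
set a := 'C(m.*2, m) in IH E1 *; set b := 'C(m.+1.*2, m.+1) in E1 *.
have H1 : (m.+1 ^ 2) * (b ^ 2 * (3 * m.+1 + 1)) = 4 * (m.*2.+1) ^ 2 * (3 * m.+1 + 1) * a ^ 2.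
  rewrite mulnA -expnMn E1 !expnMn; ring.
have H2 : 4 * (m.*2.+1) ^ 2 * (3 * m.+1 + 1) <= 16 * m.+1 ^ 2 * (3 * m + 1).
  rewrite -addnn; nia.
rewrite -(@leq_pmul2l (m.+1 ^ 2)) ?expn_gt0 // H1.
apply: leq_trans (leq_mul H2 (leqnn (a ^ 2))) _.
have E : 16 * m.+1 ^ 2 * (3 * m + 1) * a ^ 2 = 16 * m.+1 ^ 2 * (a ^ 2 * (3 * m + 1)) by ring.
have E' : m.+1 ^ 2 * 16 ^ m.+1 = 16 * m.+1 ^ 2 * 16 ^ m by rewrite [16 ^ _]expnS; ring.
by rewrite E E' leq_mul2l IH orbT.
Qed.

Section Small.
Variable m : nat.
Notation T := ('I_(m.*2)).

Lemma low_bound : #|[set S : {set T} | #|S| < m]| * 2 <= 2 ^ (m.*2).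
Proof.
set L := [set S : {set T} | #|S| < m].
have Hdis : [disjoint L & (@setC T) @: L].
  apply/pred0P => S /=; rewrite inE; apply/negP => /andP [HS /imsetP [U HU ES]].
  move: HS HU; rewrite ES !inE => H1 H2.
  have := cardsC U; rewrite card_ord => H3.
  have Hd : m.*2 = m + m by rewrite addnn.
  lia.
have := max_card (L :|: (@setC T) @: L).
rewrite cardsU (disjoint_setI0 Hdis) cards0 subn0 card_imset; last exact: setC_inj.
by rewrite card_setsT card_ord muln2 addnn.
Qed.

Lemma binle i : 'C(m.*2, m + i) <= 'C(m.*2, m).
Proof.
elim: i => [|i IH]; first by rewrite addn0.
apply: leq_trans IH; rewrite addnS.
have h := mul_bin_left m.*2 (m + i).
rewrite -(@leq_pmul2l (m + i).+1) // h leq_mul2r; apply/orP; right.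
rewrite -addnn; lia.
Qed.

Lemma set_le_split k : [set S : {set T} | #|S| <= k] = [set S : {set T} | #|S| < k] :|: [set S : {set T} | #|S| == k].
Proof. by apply/setP => S; rewrite !inE leq_eqVlt orbC. Qed.

Lemma small_le D : #|[set S : {set T} | #|S| <= m + D]| <= #|[set S : {set T} | #|S| < m]| + D.+1 * 'C(m.*2, m).
Proof.
elim: D => [|D IH].
  rewrite addn0 set_le_split mul1n; apply: leq_trans (_ : _ <= #|[set S : {set T} | #|S| < m]| + #|[set S : {set T} | #|S| == m]|) _.
    by rewrite cardsU leq_subr.
  by rewrite card_draws card_ord.
rewrite addnS set_le_split.
apply: leq_trans (_ : _ <= #|[set S : {set T} | #|S| < (m + D).+1]| + #|[set S : {set T} | #|S| == (m + D).+1]|) _.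
  by rewrite cardsU leq_subr.
have -> : [set S : {set T} | #|S| < (m + D).+1] = [set S : {set T} | #|S| <= m + D].
  by apply/setP => S; rewrite !inE ltnS.
rewrite card_draws card_ord -addnS.
have := binle D.+1; lia.
Qed.

Lemma small_final D : 16 * D.+1 ^ 2 <= 3 * m + 1 ->
  #|[set S : {set T} | #|S| <= m + D]| * 4 <= 3 * 4 ^ m.
Proof.
move=> HD.
have HL := low_bound.
have HS := small_le D.
have HC := central m.
have H4 : 4 * D.+1 * 'C(m.*2, m) <= 4 ^ m.
  rewrite -(@leq_exp2r _ _ 2) //.
  have E1 : (4 ^ m) ^ 2 = 16 ^ m by rewrite -expnM mulnC expnM.
  have E2 : (4 * D.+1 * 'C(m.*2, m)) ^ 2 = 'C(m.*2, m) ^ 2 * (16 * D.+1 ^ 2) by ring.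
  rewrite E1 E2; apply: leq_trans HC; by rewrite leq_mul2l HD orbT.
have E : 2 ^ m.*2 = 4 ^ m by rewrite -mul2n expnM.
rewrite E in HL.
nia.
Qed.
End Small.

Lemma subseq_nseq_true k (s : seq bool) : subseq (nseq k true) s = (k <= count id s).
Proof.
elim: s k => [|x s IH] [|k] //=.
case: x => /=; first by rewrite IH.
by rewrite -[true :: nseq k true]/(nseq k.+1 true) IH add0n.
Qed.

Lemma count_Zs n (z : n.-tuple bool) : #|Zs z| = count id z.
Proof.
rewrite /Zs cardsE cardE /enum_mem size_filter -{2}(map_tnth_enum z) count_map.
by rewrite enumT; apply: eq_count => i.
Qed.

Lemma alt_sum j c : (\sum_(t < j) (-1) ^+ t * (t < c)%:R)%R = (odd (minn j c))%:R%R :> F.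
Proof.
elim: j => [|j IH]; first by rewrite big_ord0 min0n.
rewrite big_ord_recr /= IH.
case: (ltnP j c) => Hjc.
  rewrite (minn_idPl Hjc) mulr1 -signr_odd /=.
  by case: (odd j) => /=; apply/val_inj.
by rewrite (minn_idPr (leqW Hjc)) mulr0 addr0.
Qed.

Lemma poly_exp a e : exists t, a * (t + 1) ^ e <= 2 ^ t.
Proof.
set u := 2 * e + a + 2.
exists (2 ^ (2 * u)).
have h1 : 2 ^ (2 * u) + 1 <= 2 ^ (2 * u).+1.
  have : 0 < 2 ^ (2 * u) by rewrite expn_gt0.
  rewrite expnS; lia.
have h2 : a < 2 ^ a by apply: ltn_expl.
have h3 : u.+1 <= 2 ^ u by apply: ltn_expl.
have h4 : a + (2 * u).+1 * e <= 2 ^ (2 * u).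
  have h5 : u.+1 ^ 2 <= 2 ^ (2 * u) by rewrite mulnC expnM; apply: leq_expl2.
  apply: leq_trans h5; rewrite /u; nia.
apply: leq_trans (_ : 2 ^ a * (2 ^ (2 * u).+1) ^ e <= _).
  apply: leq_mul; [exact: ltnW | exact: leq_expl2].
by rewrite -expnM -expnD leq_exp2l.
Qed.

Section Main.
Variables (n d l : nat) (C : circuit).
Notation N := (n.*2 + n.+1).
Hypothesis Hl : 0 < l.
Hypothesis HC : wf_circuit N C.
Hypothesis Hd : cdepth N C <= d.
Hypothesis Hcorr : forall z : N.-tuple bool, circuit_eval C z = SSD_bits n.*2 n.+1 z.

Definition rho (t : nat) (z : n.-tuple bool) : seq bool :=
  (val z ++ nseq (n - t) true ++ nseq t false) ++ nseq n.+1 true.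

Lemma rho_size t z : t <= n -> size (rho t z) = N.
Proof. move=> Ht; rewrite /rho !size_cat !size_nseq size_tuple -addnn; lia. Qed.

Lemma rho_deg t w : w < N -> deg_le 1 (fun z => (nth false (rho t z) w)%:R%R : F).
Proof.
move=> _; rewrite /rho.
case: (ltnP w n) => Hw.
  apply: deg_ext (deg_var (Ordinal Hw)) => z.
  by rewrite -catA nth_cat size_tuple Hw (tnth_nth false).
apply: deg_ext (deg_cst 1 (nth false ((nseq (n - t) true ++ nseq t false) ++ nseq n.+1 true) (w - n))%:R%R) => z.
by symmetry; rewrite -catA nth_cat size_tuple ltnNge Hw /=.
Qed.

Lemma thr t : t < n -> exists (P : n.-tuple bool -> F) (B : {set n.-tuple bool}),
  #|B| * 2^l <= size C * 2^n /\ deg_le ((2*l)^d) P /\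
  forall z, z \notin B -> P z = (t < count id z)%:R%R.
Proof.
move=> Ht.
have [P [B [HB [HP Hok]]]] := @approx_out n l N (rho t) Hl (fun z => rho_size z (ltnW Ht))
   (@rho_deg t) C d HC Hd (ltn_addl _ (ltn0Sn n)).
exists P, B; split => //; split => // z zB.
rewrite Hok //.
have Hz : size (rho t z) == N by apply/eqP; apply: rho_size; exact: ltnW.
have -> : circuit_eval C (rho t z) = circuit_eval C (Tuple Hz) by [].
rewrite Hcorr /SSD_bits /=.
have Hs : size (val z ++ nseq (n - t) true ++ nseq t false) = n.*2.
  rewrite !size_cat !size_nseq size_tuple -addnn; lia.
rewrite /rho take_size_cat // drop_size_cat // subseq_nseq_true !count_cat !count_nseq /=.
rewrite mul1n mul0n addn0.
suff -> : (n < count id z + (n - t)) = (t < count id z) by [].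
by apply/idP/idP => H'; lia.
Qed.

Lemma comb j : j <= n -> exists (Q : n.-tuple bool -> F) (Bad : {set n.-tuple bool}),
  #|Bad| * 2^l <= j * (size C * 2^n) /\ deg_le ((2*l)^d) Q /\
  forall z, z \notin Bad -> Q z = (\sum_(t < j) (-1)^+t * (t < count id z)%:R)%R.
Proof.
elim: j => [|j IH] Hj.
  exists (fun _ => 0%R), set0; split; first by rewrite cards0.
  split; first exact: deg_cst.
  by move=> z _; rewrite big_ord0.
have [Q [Bad [HB [HQ Hok]]]] := IH (ltnW Hj).
have [P [B [HB' [HP Hok']]]] := thr Hj.
exists (fun z => Q z + (-1)^+j * P z)%R, (Bad :|: B).
split.
  rewrite mulSn addnC; apply: leq_trans (leq_add HB HB').
  rewrite -mulnDl leq_mul2r; apply/orP; right.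
  by rewrite cardsU leq_subr.
split; first exact: deg_add HQ (deg_scale _ HP).
move=> z; rewrite inE negb_or => /andP [z1 z2].
by rewrite big_ord_recr /= Hok // Hok'.
Qed.

Lemma final : exists (Q : n.-tuple bool -> F) (Bad : {set n.-tuple bool}),
  #|Bad| * 2^l <= n * (size C * 2^n) /\ deg_le ((2*l)^d) Q /\
  forall z, z \notin Bad -> Q z = Par z.
Proof.
have [Q [Bad [HB [HQ Hok]]]] := comb (leqnn n).
exists Q, Bad; split => //; split => // z zB.
rewrite Hok // alt_sum /Par count_Zs.
by rewrite (minn_idPr _) // -{2}(size_tuple z) count_size.
Qed.
End Main.

Theorem mainTheorem1 :
  ~ @AC0_family (fun k => k.*2 + k.+1) (fun k => SSD_bits k.*2 k.+1).
Proof.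
move=> [C [d [c H]]].
have [t Ht] := poly_exp (64 * (8 * c.+1) ^ (2 * d)) (2 * d).
set m := 2 ^ t.
set n := m.*2.
set l := 4 + t + c + (t + 3) * c.
have Hm : 0 < m by rewrite expn_gt0.
have Hn1 : 1 <= n by rewrite /n -addnn; lia.
have [HC Hd Hs Hcorr] := H n Hn1.
have Hl : 0 < l by rewrite /l; lia.
have [Q [Bad [HB [HQ Hok]]]] := @final n d l (C n) Hl HC Hd Hcorr.
set D := (2 * l) ^ d.
have Hhard := hard HQ.
have Hn2 : n./2 = m by rewrite /n doubleK.
rewrite Hn2 in Hhard.
have A2 : 16 * D.+1 ^ 2 <= 3 * m + 1.
  have h1 : 2 * l <= 8 * c.+1 * (t + 1) by rewrite /l; nia.
  set Y := (8 * c.+1) ^ d * (t + 1) ^ d.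
  have h2 : D <= Y by rewrite /D /Y -expnMn; apply: leq_expl2.
  have h3 : 0 < Y by rewrite /Y muln_gt0 !expn_gt0 muln_gt0 addn1.
  have h4 : 16 * D.+1 ^ 2 <= 64 * (8 * c.+1) ^ (2 * d) * (t + 1) ^ (2 * d).
    have E : 64 * (8 * c.+1) ^ (2 * d) * (t + 1) ^ (2 * d) = 16 * (Y.*2) ^ 2.
      by rewrite /Y -mul2n !expnMn -!expnM [d * 2]mulnC; ring.
    rewrite E leq_mul2l; apply/orP; right; apply: leq_expl2.
    rewrite -addnn; lia.
  apply: leq_trans h4 _; apply: leq_trans Ht _; rewrite /m; lia.
have Hsm := small_final A2.
have A1 : 8 * n * size (C n) <= 2 ^ l.
  have hN : n.*2 + n.+1 <= 2 ^ (t + 3) by rewrite /n /m expnD -!addnn; lia.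
  have hs : size (C n) <= 2 ^ c * 2 ^ ((t + 3) * c).
    apply: leq_trans Hs _; apply: leq_mul; first exact: ltnW (ltn_expl _ _).
    by rewrite expnM; apply: leq_expl2.
  have -> : 2 ^ l = 8 * n * (2 ^ c * 2 ^ ((t + 3) * c)).
    by rewrite /l /n /m -mul2n !expnD; ring.
  by rewrite leq_mul2l hs orbT.
have E4 : 2 ^ n = 4 ^ m by rewrite /n -mul2n expnM.
set G := [set z | Q z == Par z] in Hhard.
have HG : #|~: Bad| <= #|G|.
  apply: subset_leq_card; apply/subsetP => z; rewrite !inE => zB.
  by rewrite Hok.
have HC2 := cardsC Bad; rewrite cardX E4 in HC2.
rewrite E4 in HB.
have HBad : #|Bad| * 8 <= 4 ^ m.
  case: (posnP (n * size (C n))) => Hz.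
    move: HB; rewrite mulnA Hz mul0n leqn0 muln_eq0 expn_eq0 /= orbF => /eqP ->.
    by rewrite mul0n.
  rewrite -(@leq_pmul2r (n * size (C n))) //.
  apply: leq_trans (_ : #|Bad| * 2 ^ l <= _).
    by rewrite -mulnA leq_mul2l mulnA A1 orbT.
  apply: leq_trans HB _; nia.
have Hhard' : #|G| <= #|[set S : {set 'I_(m.*2)} | #|S| <= m + D]| := Hhard.
have : 0 < 4 ^ m by rewrite expn_gt0.
move: Hhard' Hsm HG HC2 HBad; clear.
lia.
Qed.
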